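(* Let $n$ be odd, let $A=S(n)$, and let $p'$ be a prime divisor of $n$ with $v_{p'}(n)\geq 2$. Let $n'=n/p'$ and let $f:U(n)\to U(n')$ be the natural map. Then $L(n';p')\subseteq f(A)$.
   Context: $U(m)$ is the unit group of $\mathbb{Z}_m$; $v_p(n)=r$ means $p^r\mid n$ and $p^{r+1}\nmid n$. For odd $m=\prod p_i^{r_i}$, prime $p\mid m$ and $a\in U(m)$, $\left(\frac{a}{p}\right)$ is the Legendre symbol of the image of $a$ mod $p$, $\left(\frac{a}{m}\right)=\prod\left(\frac{a}{p_i}\right)^{r_i}$, $S(m)$ is the kernel of $a\mapsto\left(\frac{a}{m}\right)$ on $U(m)$, and $L(m;p')=\{a\in U(m):\left(\frac{a}{m}\right)=\left(\frac{a}{p'}\right)\}$ for a prime $p'\mid m$. The natural map $U(n)\to U(n')$ is induced by $a+n\mathbb{Z}\mapsto a+n'\mathbb{Z}$. *)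

(* Defs.v *)
From mathcomp Require Import all_boot all_order all_algebra.
Set Implicit Arguments. Unset Strict Implicit. Unset Printing Implicit Defensive.
Import GRing.Theory Num.Theory.

(* Elements of U(m) = (Z/mZ)^x are represented by their canonical
   representatives a with 0 <= a < m and gcd(a, m) = 1. *)
Definition inU (m a : nat) : bool := (a < m) && coprime a m.

Definition legendre (p a : nat) : int :=
  if p %| a then 0%R
  else if [exists x : 'I_p, (x * x) %% p == a %% p] then 1%R else (-1)%R.

Definition jacobi (m a : nat) : int :=
  (\prod_(p <- primes m) legendre p a ^+ logn p m)%R.

Definition Sset (m : nat) : pred nat :=
  [pred a | inU m a && (jacobi m a == 1%R)].

Definition Lset (m p' : nat) : pred nat :=
  [pred a | inU m a && (jacobi m a == legendre p' a)].

Definition natmap (n' a : nat) : nat := a %% n'.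

(* Main.v *)
Require Import Defs.
From mathcomp Require Import all_boot all_order all_algebra.
Import GRing.Theory.

Theorem lemma4p1 (n p' : nat) :
  odd n -> prime p' -> p' %| n -> 2 <= logn p' n ->
  forall b, b \in Lset (n %/ p') p' ->
  exists2 a, a \in Sset n & natmap (n %/ p') a = b.
Proof.
move=> on pp dn ln b.
set n' := n %/ p'.
have n0 : 0 < n by case: n on {dn ln n'}.
have p0 : 0 < p' := prime_gt0 pp.
have En : n = n' * p' by rewrite divnK.
have n'0 : 0 < n' by move: n0; rewrite En muln_gt0 => /andP[].
have dn' : p' %| n'.
  have : p' ^ 2 %| n by rewrite pfactor_dvdn.
  by rewrite En expnS mulnC dvdn_pmul2r.
rewrite !inE /inU => /andP[/andP[bn cb] /eqP J].
have cbp : coprime b p' by apply: coprime_dvdr dn' cb.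
have npb : ~~ (p' %| b) by rewrite -prime_coprime // coprime_sym.
exists b; last by rewrite /natmap modn_small.
rewrite !inE /inU.
have -> : b < n by apply: (leq_trans bn); rewrite En leq_pmulr.
rewrite En coprimeMr cb cbp /=.
have Pe : primes (n' * p') = primes n'.
  apply/eq_primes => q; rewrite primesM // orbC primes_prime //.
  have [->|ne] := eqVneq q p'.
    by rewrite mem_seq1 eqxx mem_primes pp n'0 dn'.
  by rewrite mem_seq1 (negbTE ne).
rewrite /jacobi Pe.
have -> : (\prod_(p <- primes n') legendre p b ^+ logn p (n' * p')
   = \prod_(p <- primes n') legendre p b ^+ logn p n'
     * \prod_(p <- primes n') (if p == p' then legendre p b else 1))%R.
  rewrite -big_split /=; apply: eq_big_seq => q; rewrite mem_primes => /and3P[pq _ _].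
  rewrite lognM // exprD; congr (_ * _)%R.
  rewrite logn_prime //; case: (q == p'); first by rewrite expr1.
  by rewrite expr0.
rewrite [X in (_ * X)%R](bigD1_seq p') ?primes_uniq ?mem_primes ?pp ?n'0 ?dn' //= eqxx.
rewrite [X in (_ * (_ * X))%R]big1 ?mulr1; last by move=> q /negbTE ->.
have: jacobi n' b = legendre p' b by [].
move=> _; rewrite [X in (X * _)%R]J /legendre (negbTE npb).
by case: ifP.
Qed.
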